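(* Let $V(1),\dots,V(T)\in\mathbb R^p$ and $0=\nu_0<\nu_1<\dots<\nu_M=T$ be such that $V(\nu_m+1)=\dots=V(\nu_{m+1})$ for all $m=0,\dots,M-1$. Let $\Delta$ be a positive integer and suppose $\nu=\nu_m$ for some $1\le m\le M-1$ satisfies $|\nu_m-\nu_{m'}|\ge\Delta$ for all $m'\ne m$. With \[ \widetilde V(t)=\sqrt{\frac{T-t}{Tt}}\sum_{r=1}^tV(r)-\sqrt{\frac{t}{T(T-t)}}\sum_{r=t+1}^TV(r),\qquad t\in\{1,\dots,T-1\}, \] it holds that \[ \max_{1\le t\le T-1}\|\widetilde V(t)\|^2\ \ge\ \frac{\|V(\nu)-V(\nu+1)\|^2\Delta^2}{48T}. \]
   Context: $\|\cdot\|$ is the Euclidean norm. *)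

(* Defs.v *)
From HB Require Import structures.
From mathcomp Require Import all_boot all_order all_algebra.
From mathcomp Require Import reals.
Set Implicit Arguments. Unset Strict Implicit. Unset Printing Implicit Defensive.
Import Order.TTheory GRing.Theory Num.Theory.
Local Open Scope ring_scope.

Definition sqnorm (R : realType) (p : nat) (v : 'rV[R]_p) : R :=
  \sum_(i < p) (v 0 i) ^+ 2.

Definition Vtilde (R : realType) (p T : nat) (V : nat -> 'rV[R]_p) (t : nat)
  : 'rV[R]_p :=
  Num.sqrt ((T%:R - t%:R) / (T%:R * t%:R)) *: (\sum_(1 <= r < t.+1) V r)
  - Num.sqrt (t%:R / (T%:R * (T%:R - t%:R))) *: (\sum_(t.+1 <= r < T.+1) V r).

(* Main.v *)
Require Import Defs.
From HB Require Import structures.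
From mathcomp Require Import all_boot all_order all_algebra.
From mathcomp Require Import reals.
From mathcomp Require Import ring lra zify.
Set Implicit Arguments. Unset Strict Implicit.
Import Order.TTheory GRing.Theory Num.Theory.
Local Open Scope ring_scope.

Section H.
Variables (R : realType) (p : nat).
Implicit Types (v w x y z : 'rV[R]_p).

Lemma sqnorm_ge0 v : 0 <= sqnorm v.
Proof. by apply: sumr_ge0 => i _; rewrite sqr_ge0. Qed.

Lemma sqnormZ (a : R) v : sqnorm (a *: v) = a ^+ 2 * sqnorm v.
Proof. rewrite /sqnorm mulr_sumr; apply: eq_bigr => i _; by rewrite mxE exprMn. Qed.

Lemma sqnorm4 w x y z :
  sqnorm (w + x + y + z) <= 4 * (sqnorm w + sqnorm x + sqnorm y + sqnorm z).
Proof.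
rewrite /sqnorm -!big_split mulr_sumr /=; apply: ler_sum => i _; rewrite !mxE.
set a := w 0 i; set b := x 0 i; set c := y 0 i; set d := z 0 i.
have := sqr_ge0 (a-b); have := sqr_ge0 (a-c); have := sqr_ge0 (a-d);
have := sqr_ge0 (b-c); have := sqr_ge0 (b-d); have := sqr_ge0 (c-d).
nra.
Qed.

Lemma le_bigmax_nat1 (F : nat -> R) a b i : (a <= i < b)%N -> (forall j, 0 <= F j) ->
  F i <= \big[Num.max/0]_(a <= t < b) F t.
Proof.
move=> iab _; apply: (le_bigmax_seq 0 i xpredT F) => //.
by rewrite mem_index_iota.
Qed.

Lemma sqnormN v : sqnorm (- v) = sqnorm v.
Proof. by rewrite -scaleN1r sqnormZ sqrrN expr1n mul1r. Qed.

Lemma sqnorm0 : sqnorm (0 : 'rV[R]_p) = 0.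
Proof. by rewrite /sqnorm big1 // => i _; rewrite mxE expr0n. Qed.

Variables (T : nat) (V : nat -> 'rV[R]_p).
Definition S t := \sum_(1 <= r < t.+1) V r.
Definition C t := S t - (t%:R / T%:R) *: S T.

Lemma S_incr a b w : (a <= b)%N -> (forall r, (a < r)%N -> (r <= b)%N -> V r = w) ->
  S b = S a + (b - a)%:R *: w.
Proof.
move=> ab Hw; rewrite /S (big_cat_nat _ (n := a.+1)) //=; congr (_ + _).
rewrite (eq_big_nat _ _ (F2 := fun _ => w)); last first.
  by move=> r /andP[h1 h2]; apply: Hw.
by rewrite sumr_const_nat subSS scaler_nat.
Qed.

Lemma Vt_eq t : (0 < t)%N -> (t < T)%N ->
  Vtilde T V t = Num.sqrt (T%:R / (t%:R * (T%:R - t%:R))) *: C t.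
Proof.
move=> t0 tT.
have T0 : (0 < T)%N by apply: ltn_trans tT.
have tR : 0 < t%:R :> R by rewrite ltr0n.
have TR : 0 < T%:R :> R by rewrite ltr0n.
have TtR : 0 < T%:R - t%:R :> R by rewrite subr_gt0 ltr_nat.
set s := Num.sqrt _.
have e1 : Num.sqrt ((T%:R - t%:R) / (T%:R * t%:R)) = s * ((T%:R - t%:R) / T%:R).
  rewrite -[(T%:R - t%:R) / T%:R]ger0_norm; last by apply: divr_ge0; apply: ltW.
  rewrite -sqrtr_sqr -sqrtrM; last by apply: divr_ge0; [apply: ltW|apply: mulr_ge0; apply: ltW].
  congr Num.sqrt; field.
  by rewrite !gt_eqF.

have e2 : Num.sqrt (t%:R / (T%:R * (T%:R - t%:R))) = s * (t%:R / T%:R).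
  rewrite -[t%:R / T%:R]ger0_norm; last by apply: divr_ge0; apply: ltW.
  rewrite -sqrtr_sqr -sqrtrM; last by apply: divr_ge0; [apply: ltW|apply: mulr_ge0; apply: ltW].
  congr Num.sqrt; field.
  by rewrite !gt_eqF.

have eS : \sum_(t.+1 <= r < T.+1) V r = S T - S t.
  rewrite /S (@big_cat_nat _ _ _ t.+1 1 T.+1) //=; last by rewrite ltnS ltnW.
  by rewrite [X in X - _]addrC addrK.
rewrite /Vtilde e1 e2 eS -/(S t) /C.
move: (S t) (S T) => X Y.
apply/rowP => i; rewrite !mxE.
field. by rewrite gt_eqF.
Qed.
End H.

Theorem lemma15 (R : realType) (p T M : nat) (V : nat -> 'rV[R]_p)
  (nu : nat -> nat) (Delta m : nat) :
  nu 0%N = 0%N -> nu M = T ->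
  (forall k, (k < M)%N -> (nu k < nu k.+1)%N) ->
  (forall k t, (k < M)%N -> (nu k < t)%N -> (t <= nu k.+1)%N -> V t = V (nu k).+1) ->
  (0 < Delta)%N ->
  (1 <= m)%N -> (m <= M - 1)%N ->
  (forall m', (m' <= M)%N -> m' <> m ->
     Delta%:R <= `|(nu m)%:R - (nu m')%:R| :> R) ->
  \big[Num.max/0]_(1 <= t < T) sqnorm (Vtilde T V t)
    >= sqnorm (V (nu m) - V (nu m).+1) * (Delta%:R ^+ 2) / (48 * T%:R).
Proof.
move=> nu0 nuM inc Vc D0 m1 mM Hd.
have mM' : (m.+1 <= M)%N by lia.
have mono : forall k j, (k + j <= M)%N -> (nu k <= nu (k + j))%N.
  move=> k; elim=> [|j IH] h; first by rewrite addn0.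
  rewrite addnS; apply: (leq_trans (IH _)); first by lia.
  by apply: ltnW; apply: inc; lia.
set n := nu m.
have [k0 km] : exists k, m = k.+1 by exists m.-1; lia.
have ltk : (nu k0 < n)%N by rewrite /n km; apply: inc; rewrite -km ltnW.
have ltm : (n < nu m.+1)%N by apply: inc.
have nuT : (nu m.+1 <= T)%N by rewrite -nuM -(subnKC mM') mono // subnKC.
have dk : (Delta <= n - nu k0)%N.
  have h1 : (k0 <= M)%N by lia.
  have h2 : k0 <> m by lia.
  move: (Hd k0 h1 h2); rewrite /n => h.
  rewrite -(ler_nat R) natrB; last exact: ltnW ltk. apply: (le_trans h).
  by rewrite ger0_norm // subr_ge0 ler_nat ltnW.
have dm : (Delta <= nu m.+1 - n)%N.
  have h2 : m.+1 <> m by lia.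
  move: (Hd m.+1 mM' h2); rewrite /n => h.
  rewrite -(ler_nat R) natrB; last exact: ltnW ltm. apply: (le_trans h).
  by rewrite distrC ger0_norm // subr_ge0 ler_nat ltnW.
set a0 := (n - Delta)%N. set b0 := (n + Delta)%N.
have a0n : (a0 <= n)%N by rewrite /a0; lia.
have nb0 : (n <= b0)%N by rewrite /b0; lia.
have b0T : (b0 <= T)%N by rewrite /b0; lia.
have T0 : (0 < T)%N by lia.
have Sn' : S V n = S V a0 + Delta%:R *: V n.
  have -> : Delta = (n - a0)%N by rewrite /a0; lia.
  apply: S_incr => // r ar rn.
  have hk : (k0 < M)%N by lia.
  have e1 : V r = V (nu k0).+1 by apply: Vc => //; [rewrite /a0 in ar; lia | rewrite -km].
  have e2 : V n = V (nu k0).+1 by apply: Vc => //; rewrite /n km.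
  by rewrite e1 e2.
have Sb' : S V b0 = S V n + Delta%:R *: V n.+1.
  have -> : Delta = (b0 - n)%N by rewrite /b0; lia.
  apply: S_incr => // r nr rb.
  by apply: Vc => //; rewrite /b0 in rb; lia.
set Mx := \big[Num.max/0]_(1 <= t < T) sqnorm (Vtilde T V t).
have Mx0 : 0 <= Mx.
  by apply: (big_ind (fun x => 0 <= x)) => // [x y hx hy|i _]; [rewrite le_max hx | apply: sqnorm_ge0].
have TR : 0 < T%:R :> R by rewrite ltr0n.
have g : forall t, (t <= T)%N -> sqnorm (C T V t) <= T%:R / 4 * Mx.
  move=> t; rewrite leq_eqVlt => /orP[/eqP->|tT].
    rewrite /C divff ?gt_eqF // scale1r subrr sqnorm0; apply: mulr_ge0 => //.
    by apply: divr_ge0; apply: ltW.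
  case: t tT => [|t] tT.
    rewrite /C /S big_geq // mul0r scale0r subrr sqnorm0; apply: mulr_ge0 => //.
    by apply: divr_ge0; apply: ltW.
  have := le_bigmax_nat1 (F := fun t => sqnorm (Vtilde T V t)) (i := t.+1) (a := 1%N) (b := T).
  rewrite tT => /(_ isT (fun j => sqnorm_ge0 _)); rewrite -/Mx Vt_eq // sqnormZ.
  have tR : 0 < t.+1%:R :> R by rewrite ltr0n.
  have TtR : 0 < T%:R - t.+1%:R :> R by rewrite subr_gt0 ltr_nat.
  rewrite sqr_sqrtr; last by apply: divr_ge0; [apply: ltW|apply: mulr_ge0; apply: ltW].
  move=> h; apply: le_trans (ler_wpM2l _ h); last by apply: divr_ge0; [apply: ltW|].
  have q0 := sqnorm_ge0 (C T V t.+1); move: (sqnorm _) q0 => q q0.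
  rewrite mulrA; apply: ler_peMl => //.
  have -> : T%:R / 4 * (T%:R / (t.+1%:R * (T%:R - t.+1%:R))) = (T%:R * T%:R) / (4 * (t.+1%:R * (T%:R - t.+1%:R))) :> R.
    by field; rewrite ?gt_eqF //; move: tR TtR; rewrite -addn1 natrD; lra.
  rewrite ler_pdivlMr ?mul1r; last by rewrite !mulr_gt0.
  have := sqr_ge0 (T%:R - 2 * t.+1%:R : R); nra.
have key : Delta%:R *: (V n - V n.+1) = - C T V a0 + C T V n + C T V n + - C T V b0.
  rewrite /C Sb' Sn'.
  have ea : a0%:R = n%:R - Delta%:R :> R by rewrite natrB // (leq_trans dk (leq_subr _ _)).
  have eb : b0%:R = n%:R + Delta%:R :> R by rewrite natrD.
  rewrite ea eb.
  move: (S V a0) (S V T) => X Y.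
  apply/rowP => i; rewrite !mxE; field; rewrite gt_eqF //.
have := sqnorm4 (- C T V a0) (C T V n) (C T V n) (- C T V b0).
rewrite -key sqnormZ !sqnormN.
have ga := g a0 (leq_trans a0n (leq_trans nb0 b0T)).
have gn := g n (leq_trans nb0 b0T).
have gb := g b0 b0T.
move=> hh.
rewrite ler_pdivrMr; last by rewrite mulr_gt0.
have dd := sqnorm_ge0 (V n - V n.+1).
move: (sqnorm (V n - V n.+1)) (sqnorm (C T V a0)) (sqnorm (C T V n)) (sqnorm (C T V b0)) dd ga gn gb hh.
move=> d x y z dd ga gn gb hh.
have TMx : 0 <= T%:R * Mx by rewrite mulr_ge0 // ltW.
nra.
Qed.
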